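(* For $n\ge 1$, there is a one-to-one correspondence between the set of signed permutations $\pi=\pi_1\pi_2\cdots\pi_n$ of $\{0,1,\dots,n-1\}$ with $\pi_n\neq 0$ (that is, $\pi_n$ is not the unbarred $0$) that are representations of signed skew derangements on $[n]$, and the set of derangements of type $B$ on $[n]$.
   Context: A signed permutation on a set $S$ of integers is an arrangement of the elements of $S$ in which some entries carry a bar. A derangement of type $B$ on $[n]$ is a signed permutation $\tau_1\cdots\tau_n$ of $[n]$ with $\tau_i\neq i$ for all $i$ (where $\tau_i=\bar i$ is allowed). A signed set on $[n]$ is $[n]$ with some elements barred; for such $X$, $X-1$ is obtained by subtracting $1$ from each element using $\bar i-1=\overline{i-1}$. A signed skew derangement on $[n]$ is a bijection $f:X\to X-1$, for some signed set $X$ on $[n]$, with $f(x)\ne x$ for all $x\in X$. The representation of a bijection $f:X\to X-1$ is the signed permutation $\pi_1\cdots\pi_n$ of $\{0,\dots,n-1\}$ given by $\pi_i=f(\sigma_i)$, where $\sigma_i$ is the element of $X$ with underlying value $i$; this gives a bijection between all such maps $f$ (over all signed sets $X$) and all signed permutations of $\{0,\dots,n-1\}$. *)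

(* Defs.v *)
From mathcomp Require Import all_boot all_fingroup.
Set Implicit Arguments.
Unset Strict Implicit.
Unset Printing Implicit Defensive.

(* A signed element is a pair (underlying value, barred?). *)
Definition selt := (nat * bool)%type.

(* A signed permutation of a set of n consecutive integers, written as a word
   pi_1 ... pi_n: the permutation part gives, for position k+1 (k : 'I_n),
   an index into the set, and the boolean says whether that entry is barred. *)
Definition sperm (n : nat) := ({perm 'I_n} * {ffun 'I_n -> bool})%type.

Definition entry0 n (p : sperm n) (k : 'I_n) : selt := (val (p.1 k), p.2 k).

Definition entry1 n (p : sperm n) (k : 'I_n) : selt := ((val (p.1 k)).+1, p.2 k).

(* Derangement of type B on [n]: tau_i <> i (unbarred i) for all i;
   tau_i = bar i is allowed. *)
Definition derangementB n (t : sperm n) : Prop :=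
  forall k : 'I_n, entry1 t k <> ((val k).+1, false).

(* A signed set X on [n]: X k says whether the element k+1 is barred. *)
Definition sset (n : nat) := {ffun 'I_n -> bool}.

(* sigma_{k+1}: the element of X with underlying value k+1. *)
Definition elX n (X : sset n) (k : 'I_n) : selt := ((val k).+1, X k).

(* The element of X-1 with underlying value k (obtained from (k+1) - 1,
   keeping the bar: bar(i) - 1 = bar(i-1)). *)
Definition elXm1 n (X : sset n) (k : 'I_n) : selt := (val k, X k).

(* Since elX X and elXm1 X enumerate X and X-1 bijectively, a bijection
   f : X -> X-1 is encoded by a permutation f of 'I_n:
   f (elX X k) = elXm1 X (f k). *)

Definition skew_derangement n (X : sset n) (f : {perm 'I_n}) : Prop :=
  forall k : 'I_n, elXm1 X (f k) <> elX X k.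

(* Representation of f : X -> X-1: the signed permutation pi of {0..n-1}
   with pi_i = f(sigma_i). *)
Definition rep n (X : sset n) (f : {perm 'I_n}) : sperm n :=
  (f, [ffun k => X (f k)]).

Lemma entry0_rep n (X : sset n) (f : {perm 'I_n}) (k : 'I_n) :
  entry0 (rep X f) k = elXm1 X (f k).
Proof. by rewrite /entry0 /rep /= ffunE. Qed.

Definition is_rep_ssd n (p : sperm n) : Prop :=
  exists (X : sset n) (f : {perm 'I_n}), skew_derangement X f /\ rep X f = p.

Definition last_not_zero n (p : sperm n) : Prop :=
  forall k : 'I_n, val k = n.-1 -> entry0 p k <> (0, false).

(* Main.v *)
Require Import Defs.
From mathcomp Require Import all_boot all_fingroup.
From Stdlib Require Import ProofIrrelevance.

Section S.
Variable n : nat.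
Hypothesis hn : 0 < n.

Definition sp : {perm 'I_n} := perm (@ord_pred_inj n).
Definition Xof (p : sperm n) : sset n := [ffun j => p.2 ((p.1^-1)%g j)].
Definition Phi (p : sperm n) : sperm n :=
  ((p.1 * sp)%g, [ffun k => Xof p (ordS k) (+) ((val k < n.-1) && Xof p k)]).

Lemma Xof_f (p : sperm n) k : Xof p (p.1 k) = p.2 k.
Proof. by rewrite /Xof ffunE permK. Qed.

Lemma valS (k : 'I_n) : val (ordS k) = if val k < n.-1 then (val k).+1 else 0.
Proof.
rewrite /= ; case: ifP => H.
  rewrite modn_small //; by case: n hn k H => // m _ k /= H.
have -> : val k = n.-1.
  by case: n hn k H => // m _ [k Hk] /= H; apply/eqP; rewrite eqn_leq -ltnS Hk leqNgt H.
by rewrite prednK // modnn.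
Qed.

Lemma pt (p : sperm n) (k : 'I_n) :
  ((val (p.1 k), p.2 k) <> ((val k).+1, Xof p k) /\
   (val k = n.-1 -> (val (p.1 k), p.2 k) <> (0,false))) <->
  (p.1 k = ordS k -> Xof p (ordS k) (+) ((val k < n.-1) && Xof p k)).
Proof.
have E : (p.1 k = ordS k) <-> val (p.1 k) = val (ordS k) by split=> [->|/val_inj].
have HS : p.1 k = ordS k -> Xof p (ordS k) = p.2 k by move=> <-; rewrite Xof_f.
have Hk := ltn_ord k.
have Ha := ltn_ord (p.1 k).
move: E HS; rewrite valS.
case: ifP => Hkn E HS.
- have Hne : val k <> n.-1 by move=> Q; rewrite Q ltnn in Hkn.
  split.
  + move=> [H1 _] /[dup] /HS -> /E Hv /=.
    by case: (p.2 k) (Xof p k) H1 => [] [] //=; rewrite Hv.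
  + move=> H; split => //.
    move=> [Hv Hb]; have := H (proj2 E Hv); rewrite HS ?Hb ?addbb //; exact: (proj2 E Hv).
- have Heq : val k = n.-1.
  by apply/eqP; rewrite eqn_leq -ltnS prednK // Hk leqNgt Hkn.
  split.
  + move=> [_ H2] /[dup] /HS -> /E Hv /=; rewrite addbF.
    by case: (p.2 k) (H2 Heq) => //; rewrite Hv.
  + move=> H; split.
      by move=> [Hv _]; move: Ha; rewrite Hv Heq prednK // ltnn.
    move=> _ [Hv Hb]; have := H (proj2 E Hv); rewrite HS ?Hb //; exact: (proj2 E Hv).
Qed.

Lemma PA (p : sperm n) : is_rep_ssd p /\ last_not_zero p <->
  forall k, p.1 k = ordS k -> Xof p (ordS k) (+) ((val k < n.-1) && Xof p k).
Proof.
have Hrep : forall X f, rep X f = p -> X = Xof p /\ f = p.1.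
  move=> X f <-; split => //; apply/ffunP => j; rewrite /Xof ffunE /rep /= ffunE; by rewrite permKV.
split.
- move=> [[X [f [Hsk /Hrep [HX Hf]]]] Hl] k; subst.
  apply/pt; split.
    by have := Hsk k; rewrite /elXm1 /elX Xof_f.
  by move=> /Hl; rewrite /entry0.
- move=> H; split.
    exists (Xof p), p.1; split.
      by move=> k; rewrite /elXm1 /elX Xof_f; case: (proj2 (pt p k) (H k)).
    clear Hrep; case: p H => f b _; congr pair; apply/ffunP => k; by rewrite ffunE /Xof ffunE /= permK.
  by move=> k; case: (proj2 (pt p k) (H k)) => _; rewrite /entry0.
Qed.

Lemma QB (p : sperm n) : derangementB (Phi p) <->
  forall k, p.1 k = ordS k -> Xof p (ordS k) (+) ((val k < n.-1) && Xof p k).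
Proof.
have E : forall k, (Phi p).1 k = k <-> p.1 k = ordS k.
  move=> k; rewrite /Phi /= permM permE; split.
    by move=> H; rewrite -{2}H ord_predK.
  by move=> ->; rewrite ordSK.
split.
- move=> H k /E Hk; have := H k; rewrite /entry1 Hk /= ffunE.
  by case: (_ (+) _).
- move=> H k; rewrite /entry1 => [[Hv]].
  have Hk : (Phi p).1 k = k by apply: val_inj; rewrite /= in Hv *; case: Hv.
  by rewrite /= ffunE (H k (proj1 (E k) Hk)).
Qed.

Lemma Y_inj (X X' : sset n) :
  (forall k : 'I_n, X (ordS k) (+) ((val k < n.-1) && X k) =
                    X' (ordS k) (+) ((val k < n.-1) && X' k)) -> X = X'.
Proof.
move=> H; apply/ffunP.
suff : forall i (j : 'I_n), val j = i -> X j = X' j by move=> S j; exact: S.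
elim=> [|i IH] j Hj.
- have Hl : n.-1 < n by rewrite prednK.
  have E : ordS (Ordinal Hl) = j by apply: val_inj; rewrite valS /= ltnn.
  by have := H (Ordinal Hl); rewrite /= ltnn /= !addbF E.
- have Hi : i < n by rewrite -Hj; exact: ltnW (ltn_ord j).
  have Hi1 : i < n.-1 by have := ltn_ord j; rewrite Hj; case: (n) => //.
  have E : ordS (Ordinal Hi) = j by apply: val_inj; rewrite valS /= Hi1.
  have := H (Ordinal Hi); rewrite /= Hi1 /= (IH (Ordinal Hi)) // E.
  by move/addIb.
Qed.

Lemma Phi_inj : injective Phi.
Proof.
move=> [f b] [f' b'] /= [Hf HY].
have Ef : f = f' by rewrite -(mulgK sp f) Hf mulgK.
subst f'.
have EX : Xof (f, b) = Xof (f, b').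
  apply: Y_inj => k; have := congr1 (fun g : {ffun 'I_n -> bool} => g k) HY; by rewrite !ffunE.
congr pair; apply/ffunP => k.
by rewrite -(Xof_f (f, b)) -(Xof_f (f, b')) /= EX.
Qed.
End S.

Theorem lemma3 (n : nat) (hn : 1 <= n) :
  exists h : {p : sperm n | is_rep_ssd p /\ last_not_zero p} ->
             {t : sperm n | derangementB t},
    bijective h.
Proof.
have HPQ : forall p, is_rep_ssd p /\ last_not_zero p -> derangementB (Phi n p).
  by move=> p /(@PA n hn) /(QB n).
have HQP : forall t, derangementB t -> is_rep_ssd (invF (@Phi_inj n hn) t) /\
   last_not_zero (invF (@Phi_inj n hn) t).
  move=> t Ht; apply/(@PA n hn)/(QB n); by rewrite f_invF.
exists (fun x => exist _ (Phi n (proj1_sig x)) (HPQ _ (proj2_sig x))).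
exists (fun y => exist _ (invF (@Phi_inj n hn) (proj1_sig y)) (HQP _ (proj2_sig y))).
- move=> [p Hp]; apply: eq_sig_hprop => /=; first by move=> ?; apply: proof_irrelevance.
  by rewrite invF_f.
- move=> [t Ht]; apply: eq_sig_hprop => /=; first by move=> ?; apply: proof_irrelevance.
  by rewrite f_invF.
Qed.
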